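(* Let $T=\{a,b,c,d,e\}$ be the semigroup with multiplication $ay=a$, $dy=d$, $ey=e$ for all $y\in T$, and $ba=bb=bd=a$, $bc=b$, $be=d$, $ca=cb=cd=a$, $cc=c$, $ce=e$. (This $T$ is the dual $(\ell_3^{\mathsf{bar}})^{\mathsf{op}}$.) Then (i) the identities satisfied by $T$ are axiomatized by $xy^2\approx xy$ and $xyz\approx xyzy$; (ii) the subpseudovariety of $\llbracket T\rrbracket$ defined by the identity $xyzx\approx xyxz$ is the unique maximal subpseudovariety of $\llbracket T\rrbracket$.
   Context: Identities are between words over a countably infinite alphabet of variables. A pseudovariety is a class of finite semigroups closed under finite direct products, subsemigroups and homomorphic images; $\llbracket S\rrbracket$ is the pseudovariety generated by $S$; a maximal subpseudovariety is a maximal proper subpseudovariety. *)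

(* Defs.v *)
From mathcomp Require Import all_boot.
Set Implicit Arguments. Unset Strict Implicit. Unset Printing Implicit Defensive.

Record finSemigroup := FinSemigroup {
  fs_car :> finType;
  fs_op : fs_car -> fs_car -> fs_car;
  fs_assoc : associative fs_op;
  fs_inhab : fs_car }.

Definition word := seq nat.

(** Value of a word under an assignment (the empty word is never used in identities). *)
Definition eval (S : finSemigroup) (f : nat -> S) (w : word) : S :=
  match w with
  | [::] => f 0
  | x :: t => foldl (fun a y => fs_op a (f y)) (f x) t
  end.

Definition satisfies (S : finSemigroup) (u v : word) : Prop :=
  forall f : nat -> S, eval f u = eval f v.

Inductive derives (Sigma : seq (word * word)) : word -> word -> Prop :=
| der_ax u v : (u, v) \in Sigma -> derives Sigma u v
| der_refl u : derives Sigma u u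
| der_sym u v : derives Sigma u v -> derives Sigma v u
| der_trans u v w : derives Sigma u v -> derives Sigma v w -> derives Sigma u w
| der_subst u v (s : nat -> word) : (forall x, s x != [::]) ->
    derives Sigma u v -> derives Sigma (flatten (map s u)) (flatten (map s v))
| der_mull w u v : derives Sigma u v -> derives Sigma (w ++ u) (w ++ v)
| der_mulr w u v : derives Sigma u v -> derives Sigma (u ++ w) (v ++ w).

Definition axiomatizes (Sigma : seq (word * word)) (S : finSemigroup) : Prop :=
  forall u v : word, u != [::] -> v != [::] ->
    (satisfies S u v <-> derives Sigma u v).

Definition hom (S R : finSemigroup) (f : S -> R) : Prop :=
  forall x y, f (fs_op x y) = fs_op (f x) (f y).

Lemma unit_assoc : associative (fun _ _ : unit => tt).
Proof. by []. Qed.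
Definition trivialS : finSemigroup := @FinSemigroup unit (fun _ _ => tt) unit_assoc tt.

Definition prod_op (S R : finSemigroup) (p q : (S * R)%type) : (S * R)%type :=
  (fs_op p.1 q.1, fs_op p.2 q.2).
Lemma prod_assoc (S R : finSemigroup) : associative (@prod_op S R).
Proof. by move=> [a b] [c d] [e g]; rewrite /prod_op /= !fs_assoc. Qed.
Definition prodS (S R : finSemigroup) : finSemigroup :=
  @FinSemigroup (S * R)%type (@prod_op S R) (@prod_assoc S R) (fs_inhab S, fs_inhab R).

(** Pseudovarieties: classes of finite semigroups closed under finite direct
    products (the empty product being the trivial semigroup), subsemigroups
    (i.e. injective homomorphisms into) and homomorphic images. *)
Definition pseudovariety (V : finSemigroup -> Prop) : Prop :=
  [/\ V trivialS,
      (forall S R, V S -> V R -> V (prodS S R)),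
      (forall (S R : finSemigroup) (f : R -> S), hom f -> injective f -> V S -> V R)
    & (forall (S R : finSemigroup) (f : S -> R), hom f ->
         (forall y, exists x, f x = y) -> V S -> V R)].

Definition gen (S : finSemigroup) : finSemigroup -> Prop :=
  fun R => forall V, pseudovariety V -> V S -> V R.

Definition subclass (U V : finSemigroup -> Prop) := forall S, U S -> V S.
Definition sameclass (U V : finSemigroup -> Prop) := forall S, U S <-> V S.

Definition maximal_sub (W V : finSemigroup -> Prop) : Prop :=
  [/\ pseudovariety W, subclass W V, ~ subclass V W &
      forall U, pseudovariety U -> subclass W U -> subclass U V ->
        sameclass U V \/ sameclass U W].

(** The semigroup T = {a,b,c,d,e} coded as 0,1,2,3,4. *)
Definition T_tab (x y : nat) : nat :=
  match x, y with
  | 1, 2 => 1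
  | 1, 4 => 3
  | 1, _ => 0
  | 2, 2 => 2
  | 2, 4 => 4
  | 2, _ => 0
  | x, _ => x
  end.
Definition T_op (x y : 'I_5) : 'I_5 := inord (T_tab x y).

Lemma T_tab_lt (x y : nat) : x < 5 -> T_tab x y < 5.
Proof. by case: x => [|[|[|[|[|x]]]]] //= _; case: y => [|[|[|[|[|y]]]]]. Qed.

Lemma T_tab_assoc (x y z : nat) : x < 5 -> y < 5 -> z < 5 ->
  T_tab x (T_tab y z) = T_tab (T_tab x y) z.
Proof.
by case: x => [|[|[|[|[|x]]]]] //; case: y => [|[|[|[|[|y]]]]] //;
   case: z => [|[|[|[|[|z]]]]].
Qed.

Lemma T_assoc : associative T_op.
Proof.
move=> x y z; apply: val_inj; rewrite /T_op /=.
rewrite !inordK ?T_tab_lt ?inordK ?T_tab_lt //.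
by apply: T_tab_assoc.
Qed.

Definition T : finSemigroup := @FinSemigroup 'I_5 T_op T_assoc ord0.

(** x y^2 ~ x y  and  x y z ~ x y z y  (x = 0, y = 1, z = 2). *)
Definition Sigma_T : seq (word * word) :=
  [:: ([:: 0; 1; 1], [:: 0; 1]); ([:: 0; 1; 2], [:: 0; 1; 2; 1])].

Definition W_T : finSemigroup -> Prop :=
  fun S => gen T S /\ satisfies S [:: 0; 1; 2; 0] [:: 0; 1; 0; 2].

(* Main.v *)
Require Import Defs.
From mathcomp Require Import all_boot.
From Stdlib Require Import Classical.
Set Implicit Arguments. Unset Strict Implicit. Unset Printing Implicit Defensive.

Lemma foldl_op (S : finSemigroup) (f : nat -> S) a b t :
  foldl (fun x y => fs_op x (f y)) (fs_op a b) t =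
  fs_op a (foldl (fun x y => fs_op x (f y)) b t).
Proof. by elim: t a b => [|y t IH] a b //=; rewrite -fs_assoc IH. Qed.

Lemma eval_cons2 (S : finSemigroup) (f : nat -> S) x y t :
  eval f [:: x, y & t] = fs_op (f x) (eval f (y :: t)).
Proof. by rewrite /= foldl_op. Qed.

Lemma eval_cat (S : finSemigroup) (f : nat -> S) (u v : word) :
  u != [::] -> v != [::] -> eval f (u ++ v) = fs_op (eval f u) (eval f v).
Proof.
case: u => [|x u] // _; case: v => [|y v] // _.
by rewrite /= foldl_cat /= foldl_op.
Qed.

Lemma cat_neq0 (u v : word) : u != [::] -> u ++ v != [::].
Proof. by case: u. Qed.

Lemma flat_neq0 (s : nat -> word) (u : word) :
  (forall x, s x != [::]) -> u != [::] -> flatten (map s u) != [::].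
Proof. by move=> Hs; case: u => [|x u] // _ /=; apply: cat_neq0. Qed.

Lemma eval_subst (S : finSemigroup) (f : nat -> S) (s : nat -> word) (u : word) :
  (forall x, s x != [::]) -> u != [::] ->
  eval f (flatten (map s u)) = eval (fun x => eval f (s x)) u.
Proof.
move=> Hs; case: u => [|x t] // _.
elim: t x => [|y t IH] x; first by rewrite /= cats0.
rewrite [flatten _]/= eval_cat //; last by apply: (flat_neq0 (u := y :: t)).
by rewrite eval_cons2 -IH.
Qed.

Lemma eq_eval (S : finSemigroup) (f g : nat -> S) w :
  (forall n, f n = g n) -> eval f w = eval g w.
Proof.
move=> E; case: w => [|x t] /=; first by [].
rewrite E; elim: t (g x) => [|y t IH] a //=.
by rewrite E IH.
Qed.

Lemma eval_prod (S R : finSemigroup) (f : nat -> prodS S R) w :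
  eval f w = (eval (fun n => (f n).1) w, eval (fun n => (f n).2) w).
Proof.
case: w => [|x t] /=; first by case: (f 0).
elim: t (f x) => [|y t IH] a /=; first by case: a.
by rewrite IH.
Qed.

Lemma eval_hom (S R : finSemigroup) (h : S -> R) (f : nat -> S) w :
  hom h -> h (eval f w) = eval (fun n => h (f n)) w.
Proof.
move=> hh; case: w => [|x t] //=.
elim: t (f x) => [|y t IH] a //=.
by rewrite IH hh.
Qed.

Lemma sat_pv (u v : word) : pseudovariety (fun S => satisfies S u v).
Proof.
split.
- by move=> f; case: (eval _ u); case: (eval _ v).
- move=> S R HS HR f; rewrite !eval_prod.
  by rewrite (HS (fun n => (f n).1)) (HR (fun n => (f n).2)).
- move=> S R h hh hinj HS f; apply: hinj; rewrite !eval_hom //; exact: HS.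
- move=> S R h hh hsurj HS g.
  pose g' n := odflt (fs_inhab S) [pick x | h x == g n].
  have Hg' : forall n, h (g' n) = g n.
    move=> n; rewrite /g'; case: pickP => [x /eqP //|H].
    have [x Hx] := hsurj (g n); by move: (H x); rewrite Hx eqxx.
  rewrite -(eq_eval u Hg') -(eq_eval v Hg') -!eval_hom //; by rewrite HS.
Qed.

Lemma pv_and (V W : finSemigroup -> Prop) :
  pseudovariety V -> pseudovariety W -> pseudovariety (fun S => V S /\ W S).
Proof.
case=> V1 V2 V3 V4 [W1 W2 W3 W4]; split.
- by [].
- by move=> S R [] ? ? [] ? ?; split; [apply: V2|apply: W2].
- by move=> S R f hf fi [] ? ?; split; [apply: V3 hf fi _|apply: W3 hf fi _].
- by move=> S R f hf fs [] ? ?; split; [apply: V4 hf fs _|apply: W4 hf fs _].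
Qed.

Lemma gen_pv S : pseudovariety (gen S).
Proof.
split.
- by move=> V [].
- by move=> A B HA HB V HV VS; case: (HV) => _ H _ _; apply: H; [apply: HA|apply: HB].
- by move=> A B f hf fi HA V HV VS; case: (HV) => _ _ H _; apply: H hf fi (HA V HV VS).
- by move=> A B f hf fs HA V HV VS; case: (HV) => _ _ _ H; apply: H hf fs (HA V HV VS).
Qed.

Lemma gen_in S : gen S S.
Proof. by move=> V. Qed.

Definition Csat (S : finSemigroup) :=
  satisfies S [:: 0; 1; 1] [:: 0; 1] /\ satisfies S [:: 0; 1; 2] [:: 0; 1; 2; 1].

Lemma Csat_pv : pseudovariety Csat.
Proof. exact: pv_and (sat_pv _ _) (sat_pv _ _). Qed.

Lemma T_opE (x y : 'I_5) : nat_of_ord (T_op x y) = T_tab x y.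
Proof. by rewrite /T_op inordK // T_tab_lt. Qed.

Lemma CsatT : Csat T.
Proof.
split=> f /=.
- move: (f 0) (f 1) => [x Hx] [y Hy]; apply: val_inj; rewrite /= !T_opE /=.
  by case: x Hx => [|[|[|[|[|x]]]]] Hx //; case: y Hy => [|[|[|[|[|y]]]]] Hy.
- move: (f 0) (f 1) (f 2) => [x Hx] [y Hy] [z Hz]; apply: val_inj; rewrite /= !T_opE /=.
  by case: x Hx => [|[|[|[|[|x]]]]] Hx //; case: y Hy => [|[|[|[|[|y]]]]] Hy //;
     case: z Hz => [|[|[|[|[|z]]]]] Hz.
Qed.

Lemma sound (S : finSemigroup) (HC : Csat S) u v : derives Sigma_T u v ->
  (u == [::]) = (v == [::]) /\ forall f : nat -> S, eval f u = eval f v.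
Proof.
elim=> {u v}.
- move=> u v; rewrite !inE => /orP [] /eqP [-> ->]; split => // f.
  + exact: (proj1 HC f).
  + exact: (proj2 HC f).
- by [].
- by move=> u v _ [E H]; split=> // f; rewrite H.
- by move=> u v w _ [E1 H1] _ [E2 H2]; split; [rewrite E1|move=> f; rewrite H1].
- move=> u v s Hs _ [E H].
  case: (boolP (u == [::])) => Hu.
    move: E; rewrite Hu => /esym/eqP ->; by rewrite (eqP Hu).
  have Hv : v != [::] by rewrite -E.
  split; first by rewrite (negbTE (flat_neq0 Hs Hu)) (negbTE (flat_neq0 Hs Hv)).
  by move=> f; rewrite !eval_subst // H.
- move=> w u v _ [E H].
  case: (boolP (u == [::])) => Hu.
    move: E; rewrite Hu => /esym/eqP ->; by rewrite (eqP Hu).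
  have Hv : v != [::] by rewrite -E.
  case: (boolP (w == [::])) => Hw; first by rewrite (eqP Hw).
  split; first by case: w Hw.
  by move=> f; rewrite !eval_cat // H.
- move=> w u v _ [E H].
  case: (boolP (u == [::])) => Hu.
    move: E; rewrite Hu => /esym/eqP ->; by rewrite (eqP Hu).
  have Hv : v != [::] by rewrite -E.
  case: (boolP (w == [::])) => Hw; first by rewrite (eqP Hw) !cats0.
  split; first by rewrite (negbTE (cat_neq0 _ Hu)) (negbTE (cat_neq0 _ Hv)).
  by move=> f; rewrite !eval_cat // H.
Qed.

Fixpoint ded (q t : seq nat) : seq nat :=
  match t with
  | [::] => q
  | y :: t' => if y \in q then ded q t' else ded (rcons q y) t'
  end.
Definition nf (w : word) : word :=
  match w with [::] => [::] | x :: t => x :: ded [::] t end.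

Lemma Sig1 : ([:: 0; 1; 1], [:: 0; 1]) \in Sigma_T. Proof. by []. Qed.
Lemma Sig2 : ([:: 0; 1; 2], [:: 0; 1; 2; 1]) \in Sigma_T. Proof. by []. Qed.

Lemma der_del x q1 y q2 t :
  derives Sigma_T (x :: q1 ++ y :: q2 ++ y :: t) (x :: q1 ++ y :: q2 ++ t).
Proof.
set P := x :: q1.
have HP : P != [::] by [].
suff H : derives Sigma_T (P ++ y :: q2 ++ [:: y]) (P ++ y :: q2).
  have := der_mulr t H; by rewrite -!catA /= -!catA.
case: q2 => [|z q2].
  pose s n := if n == 0 then P else [:: y].
  have Hs : forall n, s n != [::] by move=> n; rewrite /s; case: ifP.
  by have := der_subst Hs (der_ax Sig1); rewrite /=.
pose s n := if n == 0 then P else if n == 1 then [:: y] else z :: q2.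
have Hs : forall n, s n != [::] by move=> n; rewrite /s; case: ifP => //; case: ifP.
by have := der_sym (der_subst Hs (der_ax Sig2)); rewrite /= cats0.
Qed.

Lemma der_ded x q t : derives Sigma_T (x :: q ++ t) (x :: ded q t).
Proof.
elim: t q => [|y t IH] q /=; first by rewrite cats0; apply: der_refl.
case: ifP => Hy.
  apply: der_trans (IH q).
  case/splitPr: Hy => q1 q2.
  by rewrite -!catA /=; apply: der_del.
by rewrite -cat_rcons; apply: IH.
Qed.

Lemma der_nf w : derives Sigma_T w (nf w).
Proof. by case: w => [|x t]; [apply: der_refl | exact: (der_ded x [::] t)]. Qed.

Lemma uniq_ded q t : uniq q -> uniq (ded q t).
Proof.
elim: t q => [|y t IH] q //= Hq; case: ifP => Hy; apply: IH => //.
by rewrite rcons_uniq Hy.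
Qed.

Lemma all_ded (P : pred nat) q t : all P q -> all P t -> all P (ded q t).
Proof.
elim: t q => [|y t IH] q //= Hq /andP [Py Pt]; case: ifP => Hy; apply: IH => //.
by rewrite all_rcons Py.
Qed.

Lemma eval_nf (S : finSemigroup) (HC : Csat S) (f : nat -> S) w :
  eval f w = eval f (nf w).
Proof. exact: (proj2 (sound HC (der_nf w)) f). Qed.

Definition ta : T := @Ordinal 5 0 isT.
Definition tb : T := @Ordinal 5 1 isT.
Definition tc : T := @Ordinal 5 2 isT.
Definition td : T := @Ordinal 5 3 isT.
Definition te : T := @Ordinal 5 4 isT.

Definition F (f : nat -> T) (s : T) (L : seq nat) :=
  foldl (fun a y => T_op a (f y)) s L.

Lemma F_const f s L : (forall w, w \in L -> T_op s (f w) = s) -> F f s L = s.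
Proof.
elim: L => [|y L IH] //= H; rewrite H ?mem_head //.
by apply: IH => w Hw; apply: H; rewrite inE Hw orbT.
Qed.

Lemma F_lz f s L : (forall y, T_op s y = s) -> F f s L = s.
Proof. by move=> H; apply: F_const. Qed.

Lemma F_inv f (P : pred T) s L : P s ->
  (forall a w, P a -> w \in L -> P (T_op a (f w))) -> P (F f s L).
Proof.
elim: L s => [|y L IH] s //= Ps H; apply: IH.
  by apply: H => //; rewrite mem_head.
by move=> a w Pa Hw; apply: H => //; rewrite inE Hw orbT.
Qed.

Lemma F_split f s L y t : y \in L ->
  (forall w, w \in take (index y L) L -> T_op s (f w) = s) ->
  T_op s (f y) = t -> (forall z, T_op t z = t) -> F f s L = t.
Proof.
move=> Hy Hpre Hst Ht.
have E := cat_take_drop (index y L) L.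
rewrite /F -{1}E foldl_cat -/(F f s _) F_const //.
rewrite (drop_nth y) ?index_mem // nth_index //= Hst.
exact: F_lz.
Qed.

Lemma take_index_lt (w y : nat) (L : seq nat) : w \in take (index y L) L -> index w L < index y L.
Proof. by move=> H; rewrite -in_take // (mem_take H). Qed.

Ltac tcomp := apply: val_inj; rewrite /= ?T_opE.

Lemma lz_a z : T_op ta z = ta.
Proof. by tcomp; case: z => [[|[|[|[|[|?]]]]] ?]. Qed.
Lemma lz_d z : T_op td z = td.
Proof. by tcomp; case: z => [[|[|[|[|[|?]]]]] ?]. Qed.
Lemma lz_e z : T_op te z = te.
Proof. by tcomp; case: z => [[|[|[|[|[|?]]]]] ?]. Qed.

Lemma memdiff x y L L' : y \in L -> y \notin L' ->
  ~ (forall f, F f (f x) L = F f (f x) L').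
Proof.
move=> HyL HyL' H.
case: (eqVneq y x) => [Eyx|Nyx].
  pose f n := if n == x then tb else tc.
  have := H f.
  have -> : f x = tb by rewrite /f eqxx.
  rewrite (@F_split f tb L x ta); first last.
  - exact: lz_a.
  - by rewrite /f eqxx; tcomp.
  - move=> w Hw; have := take_index_lt Hw; rewrite /f.
    case: eqP => [->|_]; first by rewrite ltnn.
    by move=> _; tcomp.
  - by rewrite -Eyx.
  rewrite F_const; first by move/(congr1 val).
  move=> w Hw; rewrite /f; case: eqP => [Ew|_]; last by tcomp.
  by move: HyL'; rewrite Eyx -Ew Hw.
pose f n := if n == y then te else tc.
have := H f.
have -> : f x = tc by rewrite /f eq_sym (negbTE Nyx).
rewrite (@F_split f tc L y te); first last.
- exact: lz_e.
- by rewrite /f eqxx; tcomp.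
- move=> w Hw; have := take_index_lt Hw; rewrite /f.
  case: eqP => [->|_]; first by rewrite ltnn.
  by move=> _; tcomp.
- by [].
rewrite F_const; first by move/(congr1 val).
move=> w Hw; rewrite /f; case: eqP => [Ew|_]; last by tcomp.
by move: HyL'; rewrite -Ew Hw.
Qed.

Lemma order_nox x y z L L' : y \in L -> z \in L' ->
  index y L < index z L -> index z L' < index y L' -> y != x -> z != x ->
  ~ (forall f, F f (f x) L = F f (f x) L').
Proof.
move=> HyL HzL' iL iL' Nyx Nzx H.
have Nyz : y != z by apply/eqP => Eyz; move: iL; rewrite Eyz ltnn.
pose f n := if n == y then te else if n == z then tb else tc.
have := H f.
have -> : f x = tc by rewrite /f eq_sym (negbTE Nyx) eq_sym (negbTE Nzx).
rewrite (@F_split f tc L y te); first last.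
- exact: lz_e.
- by rewrite /f eqxx; tcomp.
- move=> w Hw; have := take_index_lt Hw; rewrite /f.
  case: eqP => [->|_]; first by rewrite ltnn.
  case: eqP => [->|_]; first by move/(ltn_trans iL); rewrite ltnn.
  by move=> _; tcomp.
- by [].
rewrite (@F_split f tc L' z ta); first last.
- exact: lz_a.
- by rewrite /f eq_sym (negbTE Nyz) eqxx; tcomp.
- move=> w Hw; have := take_index_lt Hw; rewrite /f.
  case: eqP => [->|_]; first by move/(ltn_trans iL'); rewrite ltnn.
  case: eqP => [->|_]; first by rewrite ltnn.
  by move=> _; tcomp.
- by [].
by move/(congr1 val).
Qed.

Lemma order_x x z L L' : x \in L -> z \in L' ->
  index x L < index z L -> index z L' < index x L' ->
  ~ (forall f, F f (f x) L = F f (f x) L').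
Proof.
move=> HxL HzL' iL iL' H.
have Nxz : z != x by apply/eqP => Ezx; move: iL; rewrite Ezx ltnn.
pose f n := if n == x then tb else if n == z then te else tc.
have := H f.
have -> : f x = tb by rewrite /f eqxx.
rewrite (@F_split f tb L x ta); first last.
- exact: lz_a.
- by rewrite /f eqxx; tcomp.
- move=> w Hw; have := take_index_lt Hw; rewrite /f.
  case: eqP => [->|_]; first by rewrite ltnn.
  case: eqP => [->|_]; first by move/(ltn_trans iL); rewrite ltnn.
  by move=> _; tcomp.
- by [].
rewrite (@F_split f tb L' z td); first last.
- exact: lz_d.
- by rewrite /f (negbTE Nxz) eqxx; tcomp.
- move=> w Hw; have := take_index_lt Hw; rewrite /f.
  case: eqP => [->|_]; first by move/(ltn_trans iL'); rewrite ltnn.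
  case: eqP => [->|_]; first by rewrite ltnn.
  by move=> _; tcomp.
- by [].
by move/(congr1 val).
Qed.

Lemma comb (L L' : seq nat) : uniq L -> uniq L' -> L != L' ->
  (exists y, y \in L /\ y \notin L') \/ (exists y, y \in L' /\ y \notin L) \/
  (exists y z, [/\ y \in L, z \in L', index y L < index z L & index z L' < index y L']).
Proof.
elim: L L' => [|h L IH] [|h' L'] //=.
- by move=> _ _ _; right; left; exists h'; rewrite mem_head.
- by move=> _ _ _; left; exists h; rewrite mem_head.
move=> /andP [hL uL] /andP [hL' uL'] Ne.
case: (eqVneq h h') => [Ehh|Nhh].
  subst h'.
  have NL : L != L' by apply: contraNneq Ne => ->.
  case: (IH L' uL uL' NL) => [[y [Hy Hy']]|[[y [Hy Hy']]|[y [z [Hy Hz i1 i2]]]]].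
  - left; exists y; rewrite inE Hy orbT; split => //.
    rewrite inE negb_or Hy' andbT; apply: contraNneq hL => <-. done.
  - right; left; exists y; rewrite inE Hy orbT; split => //.
    rewrite inE negb_or Hy' andbT; apply: contraNneq hL' => <-. done.
  - right; right; exists y, z.
    have Nhy : h != y by apply: contraNneq hL => ->.
    have Nhz : h != z by apply: contraNneq hL' => ->.
    by rewrite !inE Hy Hz !orbT (negbTE Nhy) (negbTE Nhz).
case: (boolP (h \in h' :: L')) => HhL'; last first.
  by left; exists h; rewrite mem_head.
case: (boolP (h' \in h :: L)) => Hh'L; last first.
  by right; left; exists h'; rewrite mem_head.
right; right; exists h, h'; split => //.
- by rewrite mem_head.
- by rewrite mem_head.
- by rewrite eqxx (negbTE Nhh).
- by rewrite eqxx eq_sym (negbTE Nhh).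
Qed.

Lemma nf_eqT x L x' L' : uniq L -> uniq L' ->
  (forall f, F f (f x) L = F f (f x') L') -> x = x' /\ L = L'.
Proof.
move=> uL uL' H.
have Exx : x = x'.
  apply/eqP; apply/negPn/negP => Nx.
  pose f n := if n == x then td else tc.
  have := H f.
  have -> : f x = td by rewrite /f eqxx.
  have -> : f x' = tc by rewrite /f eq_sym (negbTE Nx).
  rewrite F_lz; last exact: lz_d.
  have : (fun a => (a == tc) || (a == ta)) (F f tc L').
    apply: (@F_inv f (fun a => (a == tc) || (a == ta))); first by rewrite eqxx.
    move=> a w /orP [] /eqP -> _; rewrite /f; case: ifP => _.
    + by apply/orP; right; apply/eqP; tcomp.
    + by apply/orP; left; apply/eqP; tcomp.
    + by rewrite lz_a eqxx orbT.
    + by rewrite lz_a eqxx orbT.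
  by move=> /= /orP [] /eqP -> /(congr1 val).
subst x'; split => //.
apply/eqP; apply/negPn/negP => Ne.
case: (comb uL uL' Ne) => [[y [Hy Hy']]|[[y [Hy Hy']]|[y [z [Hy Hz i1 i2]]]]].
- exact: memdiff Hy Hy' H.
- exact: (memdiff Hy Hy' (fun f => esym (H f))).
case: (boolP (z \in L)) => Hz1; last exact: (memdiff Hz Hz1 (fun f => esym (H f))).
case: (boolP (y \in L')) => Hy1; last exact: memdiff Hy Hy1 H.
case: (eqVneq y x) => [Eyx|Nyx].
  subst y; exact: order_x Hy Hz i1 i2 H.
case: (eqVneq z x) => [Ezx|Nzx].
  subst z; exact: (order_x Hz Hy i2 i1 (fun f => esym (H f))).
exact: order_nox Hy Hz i1 i2 Nyx Nzx H.
Qed.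

Lemma nf_complete (u v : word) : u != [::] -> v != [::] ->
  satisfies T u v -> nf u = nf v.
Proof.
case: u => [|x t] // _; case: v => [|x' t'] // _ H.
have H' : forall f, F f (f x) (ded [::] t) = F f (f x') (ded [::] t').
  move=> f; have := H f; rewrite (eval_nf CsatT f (x :: t)) (eval_nf CsatT f (x' :: t')).
  done.
have [E1 E2] := nf_eqT (uniq_ded _ (isT : uniq [::])) (uniq_ded _ (isT : uniq [::])) H'.
by rewrite /= E1 E2.
Qed.

Lemma part1 : axiomatizes Sigma_T T.
Proof.
move=> u v Hu Hv; split.
- move=> H; have E := nf_complete Hu Hv H.
  apply: der_trans (der_nf u) _; rewrite E; exact: der_sym (der_nf v).
- by move=> D; exact: (proj2 (sound CsatT D)).
Qed.

Definition U3 : seq (seq nat) :=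
  [:: [::]; [::0]; [::1]; [::2]; [::0;1]; [::1;0]; [::0;2]; [::2;0]; [::1;2]; [::2;1];
      [::0;1;2]; [::0;2;1]; [::1;0;2]; [::1;2;0]; [::2;0;1]; [::2;1;0]].
Definition NFlist : seq word := [seq h :: L | h <- [::0;1;2], L <- U3].

Definition tTn (n : nat) : nat := if n == 0 then 1 else if n == 1 then 2 else 4.
Definition tauN (w : word) : nat :=
  match w with [::] => tTn 0 | x :: t => foldl (fun a y => T_tab a (tTn y)) (tTn x) t end.
Definition tT (n : nat) : T := if n == 0 then tb else if n == 1 then tc else te.

Definition subst (s : nat -> word) (w : word) := flatten (map s w).
Definition sig1 (n : nat) : word := if n == 0 then [::0;1] else if n == 1 then [::1] else [::2].
Definition sig2 (n : nat) : word := if n == 0 then [::0] else if n == 1 then [::1] else [::2].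
Definition sig3 (n : nat) : word := if n == 0 then [::0] else if n == 1 then [::0] else [::2].
Definition sig4 (n : nat) : word := if n == 0 then [::0] else if n == 1 then [::2] else [::1].
Definition lam1 : word := [::].
Definition lam2 : word := [::0].
Definition lam3 : word := [::0;1].
Definition lam4 : word := [::0;1].

Definition W1 : word := [::0;1;0;2].
Definition W2 : word := [::0;1;2;0].
Definition sepw (a b : word) := ((a == W1) && (b == W2)) || ((a == W2) && (b == W1)).
Definition test (lam : word) (s : nat -> word) (n1 n2 : word) :=
  has (fun t => sepw (nf (lam ++ subst s n1 ++ t)) (nf (lam ++ subst s n2 ++ t)))
    [:: [::2;0]; [::0;2]].

Definition check :=
  all (fun n1 => all (fun n2 =>
     (tauN n1 == tauN n2) || test lam1 sig1 n1 n2 || test lam2 sig2 n1 n2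
     || test lam3 sig3 n1 n2 || test lam4 sig4 n1 n2) NFlist) NFlist.
Lemma checkT : check. Proof. vm_compute. reflexivity. Qed.

Lemma NF_ok : all (fun w => (w != [::]) && all (fun n => n < 3) w) NFlist.
Proof. by []. Qed.

Lemma mem3 a : a < 3 -> a \in [:: 0; 1; 2].
Proof. by case: a => [|[|[|a]]]. Qed.

Lemma U3mem (L : seq nat) : uniq L -> all (fun n => n < 3) L -> L \in U3.
Proof.
move=> uL aL.
have : size L <= 3.
  have -> : 3 = size (iota 0 3) by [].
  apply: uniq_leq_size uL _ => n Hn; rewrite mem_iota /=.
  by move/allP: aL => /(_ n Hn).
case: L uL aL => [|a [|b [|c [|d L]]]] //=.
- by move=> _ /andP [/mem3 Ha _] _; move: Ha; rewrite !inE => /or3P [] /eqP ->.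
- move=> U /and3P [/mem3 Ha /mem3 Hb _] _; move: U.
  by move: Ha Hb; rewrite !inE => /or3P [] /eqP -> /or3P [] /eqP ->.
- move=> U /and4P [/mem3 Ha /mem3 Hb /mem3 Hc _] _; move: U.
  by move: Ha Hb Hc; rewrite !inE => /or3P [] /eqP -> /or3P [] /eqP -> /or3P [] /eqP ->.
Qed.

Lemma nf_mem (w : word) : w != [::] -> all (fun n => n < 3) w -> nf w \in NFlist.
Proof.
case: w => [|x t] // _ /= /andP [Hx Ht].
have HL := U3mem (uniq_ded t (isT : uniq [::])) (all_ded (isT : all (fun n => n < 3) [::]) Ht).
have : all (fun L => all (fun h => (h :: L) \in NFlist) [::0;1;2]) U3 by [].
move/allP => /(_ _ HL) /allP; apply; exact: mem3.
Qed.

Lemma tT_val n : nat_of_ord (tT n) = tTn n.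
Proof. by rewrite /tT /tTn; case: ifP => _ //; case: ifP. Qed.

Lemma tau_eval w : nat_of_ord (eval tT w) = tauN w.
Proof.
case: w => [|x t] /=; first by [].
rewrite -(tT_val x); elim: t (tT x) => [|y t IH] a //=.
by rewrite IH T_opE tT_val.
Qed.

Definition P4 (S : finSemigroup) := prodS S (prodS S (prodS S S)).
Definition gco (S : finSemigroup) (f0 : nat -> S) (s : nat -> word) (n : nat) : S :=
  eval f0 (s n).
Definition gS (S : finSemigroup) (f0 : nat -> S) : nat -> P4 S :=
  fun n => (gco f0 sig1 n, (gco f0 sig2 n, (gco f0 sig3 n, gco f0 sig4 n))).

Lemma sig1_ne n : sig1 n != [::]. Proof. by rewrite /sig1; case: ifP => //; case: ifP. Qed.
Lemma sig2_ne n : sig2 n != [::]. Proof. by rewrite /sig2; case: ifP => //; case: ifP. Qed.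
Lemma sig3_ne n : sig3 n != [::]. Proof. by rewrite /sig3; case: ifP => //; case: ifP. Qed.
Lemma sig4_ne n : sig4 n != [::]. Proof. by rewrite /sig4; case: ifP => //; case: ifP. Qed.

Lemma cat_congr (S : finSemigroup) (f : nat -> S) lam X1 X2 t :
  X1 != [::] -> X2 != [::] -> t != [::] -> eval f X1 = eval f X2 ->
  eval f (lam ++ X1 ++ t) = eval f (lam ++ X2 ++ t).
Proof.
move=> h1 h2 ht E; case: lam => [|a lam]; first by rewrite /= !eval_cat // E.
by rewrite !(@eval_cat _ f (a :: lam)) ?cat_neq0 // !eval_cat // E.
Qed.

Lemma coord_sep (S : finSemigroup) (HC : Csat S) (f0 : nat -> S) lam s n1 n2 :
  (forall n, s n != [::]) -> n1 != [::] -> n2 != [::] ->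
  eval (gco f0 s) n1 = eval (gco f0 s) n2 -> test lam s n1 n2 ->
  eval f0 W1 = eval f0 W2.
Proof.
move=> Hs h1 h2 E /hasP [t Ht].
have ht : t != [::] by move: Ht; rewrite !inE => /orP [] /eqP ->.
rewrite /gco -!eval_subst // in E.
have E2 := cat_congr lam (flat_neq0 Hs h1) (flat_neq0 Hs h2) ht E.
rewrite (eval_nf HC f0 (lam ++ _)) (eval_nf HC f0 (lam ++ flatten _ ++ t)) in E2.
rewrite /subst; case/orP => /andP [/eqP E1 /eqP E3]; rewrite E1 E3 in E2 => //.
Qed.

Lemma sep (S : finSemigroup) (HC : Csat S) (f0 : nat -> S)
  (Hw : eval f0 W1 <> eval f0 W2) n1 n2 :
  n1 \in NFlist -> n2 \in NFlist -> eval (gS f0) n1 = eval (gS f0) n2 ->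
  tauN n1 = tauN n2.
Proof.
move=> H1 H2 E.
have /andP [ne1 _] := allP NF_ok _ H1.
have /andP [ne2 _] := allP NF_ok _ H2.
rewrite !eval_prod in E.
case: E => E1 E2 E3 E4.
have F1 : eval (gco f0 sig1) n1 = eval (gco f0 sig1) n2 := E1.
have F2 : eval (gco f0 sig2) n1 = eval (gco f0 sig2) n2 := E2.
have F3 : eval (gco f0 sig3) n1 = eval (gco f0 sig3) n2 := E3.
have F4 : eval (gco f0 sig4) n1 = eval (gco f0 sig4) n2 := E4.
have := checkT; move/allP/(_ _ H1)/allP/(_ _ H2).
move=> /orP [/orP [/orP [/orP [/eqP //|]|]|]|] Ht; exfalso; apply: Hw.
- exact: (@coord_sep S HC f0 lam1 sig1 n1 n2 sig1_ne ne1 ne2 F1 Ht).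
- exact: (@coord_sep S HC f0 lam2 sig2 n1 n2 sig2_ne ne1 ne2 F2 Ht).
- exact: (@coord_sep S HC f0 lam3 sig3 n1 n2 sig3_ne ne1 ne2 F3 Ht).
- exact: (@coord_sep S HC f0 lam4 sig4 n1 n2 sig4_ne ne1 ne2 F4 Ht).
Qed.

Lemma sepT (S : finSemigroup) (HC : Csat S) (f0 : nat -> S)
  (Hw : eval f0 W1 <> eval f0 W2) n1 n2 :
  n1 \in NFlist -> n2 \in NFlist -> eval (gS f0) n1 = eval (gS f0) n2 ->
  eval tT n1 = eval tT n2.
Proof. by move=> H1 H2 E; apply: val_inj; rewrite /= !tau_eval; apply: sep E. Qed.

Lemma Csat_P4 S : Csat S -> Csat (P4 S).
Proof. by case: Csat_pv => _ H _ _ HS; rewrite /P4; apply H => //; apply H => //; apply H. Qed.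

Definition Rset (S : finSemigroup) (f0 : nat -> S) : seq (P4 S) :=
  map (eval (gS f0)) NFlist.

Lemma Rclosed (S : finSemigroup) (HC : Csat S) (f0 : nat -> S) x y :
  x \in Rset f0 -> y \in Rset f0 -> fs_op x y \in Rset f0.
Proof.
move=> /mapP [w1 H1 ->] /mapP [w2 H2 ->].
have /andP [ne1 a1] := allP NF_ok _ H1.
have /andP [ne2 a2] := allP NF_ok _ H2.
rewrite -eval_cat // (eval_nf (Csat_P4 HC)); apply: map_f; apply: nf_mem.
  exact: cat_neq0.
by rewrite all_cat a1 a2.
Qed.

Definition Rcar (S : finSemigroup) (f0 : nat -> S) := {x : P4 S | x \in Rset f0}.

Definition Rop (S : finSemigroup) (HC : Csat S) (f0 : nat -> S) (x y : Rcar f0) : Rcar f0 :=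
  exist _ (fs_op (val x) (val y)) (Rclosed HC (valP x) (valP y)).

Lemma Rassoc (S : finSemigroup) (HC : Csat S) (f0 : nat -> S) : associative (@Rop S HC f0).
Proof. by move=> x y z; apply: val_inj; rewrite /= prod_assoc. Qed.

Definition R0 (S : finSemigroup) (f0 : nat -> S) : Rcar f0 :=
  exist _ (eval (gS f0) [::0]) (map_f _ (isT : [::0] \in NFlist)).

Definition Rsg (S : finSemigroup) (HC : Csat S) (f0 : nat -> S) : finSemigroup :=
  @FinSemigroup (Rcar f0) (@Rop S HC f0) (@Rassoc S HC f0) (@R0 S f0).

Definition nfOf (S : finSemigroup) (f0 : nat -> S) (x : Rcar f0) : word :=
  nth [::0] NFlist (index (val x) (Rset f0)).

Lemma nfOf_mem (S : finSemigroup) (f0 : nat -> S) (x : Rcar f0) : nfOf x \in NFlist.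
Proof.
apply: mem_nth; rewrite -(size_map (eval (gS f0))) -/(Rset f0) index_mem.
exact: valP.
Qed.

Lemma nfOf_eval (S : finSemigroup) (f0 : nat -> S) (x : Rcar f0) :
  eval (gS f0) (nfOf x) = val x.
Proof.
have Hx : val x \in Rset f0 := valP x.
rewrite /nfOf -(nth_map [::0] (eval (gS f0) [::0])); first by rewrite nth_index.
by rewrite -(size_map (eval (gS f0))) index_mem.
Qed.

Definition phi (S : finSemigroup) (HC : Csat S) (f0 : nat -> S) (x : Rsg HC f0) : T :=
  eval tT (nfOf x).

Lemma phi_hom (S : finSemigroup) (HC : Csat S) (f0 : nat -> S)
  (Hw : eval f0 W1 <> eval f0 W2) : hom (phi (HC := HC) (f0 := f0)).
Proof.
move=> x y; rewrite /phi.
have /andP [ne1 a1] := allP NF_ok _ (@nfOf_mem S f0 x).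
have /andP [ne2 a2] := allP NF_ok _ (@nfOf_mem S f0 y).
have Hc := cat_neq0 (nfOf y) ne1.
have Ha : all (fun n => n < 3) (nfOf x ++ nfOf y).
  rewrite all_cat. by apply/andP.
have E1 := (@eval_cat T tT (nfOf x) (nfOf y) ne1 ne2).
have E2 := (eval_nf CsatT tT (nfOf x ++ nfOf y)).
have E3 := (sepT HC Hw (@nfOf_mem S f0 (fs_op x y)) (nf_mem Hc Ha)).
have E4 := (eval_nf (Csat_P4 HC) (gS f0) (nfOf x ++ nfOf y)).
have E5 := (@eval_cat (P4 S) (gS f0) _ _ ne1 ne2).
have Hv : @fs_op (P4 S) (eval (gS f0) (nfOf x)) (eval (gS f0) (nfOf y)) = val (fs_op x y :> Rcar f0)
  := f_equal2 (@fs_op (P4 S)) (@nfOf_eval S f0 x) (@nfOf_eval S f0 y).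
have H : eval (gS f0) (nfOf (fs_op x y)) = eval (gS f0) (nf (nfOf x ++ nfOf y))
  := etrans (@nfOf_eval S f0 (fs_op x y)) (etrans (esym Hv) (etrans (esym E5) E4)).
exact: (etrans (E3 H) (etrans (esym E2) E1)).
Qed.


Lemma phi_exist (S : finSemigroup) (HC : Csat S) (f0 : nat -> S)
  (Hw : eval f0 W1 <> eval f0 W2) w (Hw' : w \in NFlist) :
  phi (HC := HC) (exist _ (eval (gS f0) w) (map_f _ Hw')) = eval tT w.
Proof.
rewrite /phi; apply: (sepT HC Hw (nfOf_mem _) Hw').
by rewrite nfOf_eval.
Qed.

Lemma phi_surj (S : finSemigroup) (HC : Csat S) (f0 : nat -> S)
  (Hw : eval f0 W1 <> eval f0 W2) (t : T) : exists x, phi (HC := HC) (f0 := f0) x = t.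
Proof.
have E : forall w (Hw' : w \in NFlist), eval tT w = t ->
   exists x, phi (HC := HC) (f0 := f0) x = t.
  by move=> w Hw' Et; exists (exist _ (eval (gS f0) w) (map_f _ Hw')); rewrite phi_exist.
move: E; case: t => [[|[|[|[|[|k]]]]] Hk] // E.
- by apply: (E [::0;0] isT); apply: ord_inj; rewrite tau_eval.
- by apply: (E [::0] isT); apply: ord_inj; rewrite tau_eval.
- by apply: (E [::1] isT); apply: ord_inj; rewrite tau_eval.
- by apply: (E [::0;2] isT); apply: ord_inj; rewrite tau_eval.
- by apply: (E [::2] isT); apply: ord_inj; rewrite tau_eval.
Qed.

Lemma key (S : finSemigroup) : gen T S -> ~ satisfies S W2 W1 ->
  forall V, pseudovariety V -> V S -> V T.
Proof.
move=> HS Hn V HV VS.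
have HC : Csat S := HS _ Csat_pv CsatT.
have [f0 Hf0] : exists f0 : nat -> S, eval f0 W1 <> eval f0 W2.
  apply: NNPP => H; apply: Hn => f; apply: NNPP => H'; apply: H; exists f => E.
  by apply: H'; rewrite E.
case: (HV) => V1 V2 V3 V4.
have VP : V (P4 S) by rewrite /P4; apply V2 => //; apply V2 => //; apply V2.
have VR : V (Rsg HC f0).
  apply: (V3 (P4 S) (Rsg HC f0) (fun x => val x)) => //.
  exact: val_inj.
exact: (V4 (Rsg HC f0) T _ (@phi_hom S HC f0 Hf0) (@phi_surj S HC f0 Hf0) VR).
Qed.

Lemma T_fails : ~ satisfies T W2 W1.
Proof. by move=> H; have := H tT; move/(congr1 (@nat_of_ord 5)); rewrite !tau_eval. Qed.

Lemma W_pv : pseudovariety W_T.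
Proof. exact: pv_and (gen_pv T) (sat_pv _ _). Qed.

Theorem proposition5p30 :
  axiomatizes Sigma_T T /\
  (maximal_sub W_T (gen T) /\
   forall U, maximal_sub U (gen T) -> sameclass U W_T).
Proof.
split; first exact: part1.
have notsub : ~ subclass (gen T) W_T := fun H => T_fails (proj2 (H T (@gen_in T))).
split.
  split => //; first exact: W_pv; first by move=> S [].
  move=> U HU WU UG.
  case: (classic (exists S, U S /\ ~ satisfies S W2 W1)) => [[S [US Hn]]|H].
    left => R; split; first exact: UG.
    by move=> GR; apply: GR HU (key (UG S US) Hn HU US).
  right => R; split; last exact: WU.
  move=> UR; split; first exact: UG.
  apply: NNPP => Hn; apply: H; by exists R.
move=> U [HU UG nGU Umax] S.
have UW : subclass U W_T.
  move=> R UR; split; first exact: UG.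
  apply: NNPP => Hn; apply: nGU => R' GR'.
  exact: GR' U HU (key (UG R UR) Hn HU UR).
case: (Umax W_T W_pv UW (fun R (WR : W_T R) => proj1 WR)) => E.
  by exfalso; apply: notsub => R GR; apply/E.
by split => [/E | H]; [|apply/E].
Qed.
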